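(* Let $N$ be a positive integer and $K$ a compact Hausdorff space. Then $\ell_\infty^N$ can be U-embedded into $C(K)$ if and only if $K$ contains at least $N$ distinct $G_\delta$-points (points $p$ such that $\{p\}$ is a $G_\delta$-subset of $K$).
   Context: $\ell_\infty^N$ is $\mathbb R^N$ with the max norm; $C(K)$ carries the sup norm. A linear isometry $T\colon X\to Y$ is a U-embedding if every $x^*\in X^*$ has a unique $y^*\in Y^*$ with $T^*(y^* )=x^*$ and $\|y^*\|=\|x^*\|$. *)

(* Defs.v *)
From HB Require Import structures.
From mathcomp Require Import all_boot all_order all_algebra.
From mathcomp Require Import all_classical all_reals all_analysis.
Set Implicit Arguments. Unset Strict Implicit. Unset Printing Implicit Defensive.
Import Order.TTheory GRing.Theory Num.Theory.
Import numFieldNormedType.Exports.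
Local Open Scope classical_set_scope.
Local Open Scope ring_scope.

Definition linf_norm {R : realType} {N : nat} (x : 'I_N -> R) : R :=
  \big[Num.max/0]_(i < N) `|x i|.

Definition sup_norm {R : realType} {K : topologicalType} (f : K -> R) : R :=
  sup [set `|f k| | k in [set: K]].

(* linear functionals on ell_infty^N (all are bounded) and their dual norm *)
Definition lin_fun_linf {R : realType} {N : nat} (xs : ('I_N -> R) -> R) : Prop :=
  forall (a : R) (x y : 'I_N -> R), xs (fun i => a * x i + y i) = a * xs x + xs y.

Definition dual_norm_linf {R : realType} {N : nat} (xs : ('I_N -> R) -> R) : R :=
  sup [set `|xs x| | x in [set x | linf_norm x <= 1]].

(* elements of C(K)^* : bounded linear functionals on the continuous functions
   (values of phi off C(K) are irrelevant) *)
Definition CK_dual {R : realType} {K : topologicalType} (phi : (K -> R) -> R) : Prop :=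
  (forall (a : R) (f g : K -> R), continuous f -> continuous g ->
     phi (fun k => a * f k + g k) = a * phi f + phi g) /\
  exists M : R, forall f : K -> R, continuous f -> `|phi f| <= M * sup_norm f.

Definition CK_dual_norm {R : realType} {K : topologicalType} (phi : (K -> R) -> R) : R :=
  sup [set `|phi f| | f in [set f : K -> R | continuous f /\ sup_norm f <= 1]].

Definition lin_isometry {R : realType} {N : nat} {K : topologicalType}
  (T : ('I_N -> R) -> (K -> R)) : Prop :=
  (forall x, continuous (T x)) /\
  (forall (a : R) (x y : 'I_N -> R), T (fun i => a * x i + y i) = (fun k => a * T x k + T y k)) /\
  (forall x, sup_norm (T x) = linf_norm x).

Definition U_embedding {R : realType} {N : nat} {K : topologicalType}
  (T : ('I_N -> R) -> (K -> R)) : Prop :=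
  lin_isometry T /\
  forall xs : ('I_N -> R) -> R, lin_fun_linf xs ->
    (exists phi, CK_dual phi /\ (forall x, phi (T x) = xs x) /\
                 CK_dual_norm phi = dual_norm_linf xs) /\
    (forall phi1 phi2, CK_dual phi1 -> CK_dual phi2 ->
       (forall x, phi1 (T x) = xs x) -> CK_dual_norm phi1 = dual_norm_linf xs ->
       (forall x, phi2 (T x) = xs x) -> CK_dual_norm phi2 = dual_norm_linf xs ->
       forall f : K -> R, continuous f -> phi1 f = phi2 f).

Definition Gdelta_point {K : topologicalType} (p : K) : Prop :=
  exists U : nat -> set K, (forall n, open (U n)) /\ \bigcap_n U n = [set p].

(* Main.v *)
Require Import Defs.
From HB Require Import structures.
From mathcomp Require Import all_boot all_order all_algebra.
From mathcomp Require Import all_classical all_reals all_analysis.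
From mathcomp Require Import ring lra.
Unset Strict Implicit. Unset Printing Implicit Defensive.
Import Order.TTheory GRing.Theory Num.Theory.
Import numFieldNormedType.Exports.
Local Open Scope classical_set_scope.
Local Open Scope ring_scope.

Set Implicit Arguments.

Section SupNorm.
Context {R : realType} {K : topologicalType}.
Hypothesis cK : compact [set: K].

Lemma sup_eqP (A : set R) a : A a -> (forall b, A b -> b <= a) -> sup A = a.
Proof.
move=> Aa ub; apply/le_anti/andP; split.
  by apply: ge_sup; [exists a|].
by apply: sup_upper_bound => //; split; [exists a| exists a].
Qed.

Lemma norm_cont (f : K -> R) : continuous f -> continuous (fun k => `|f k|).
Proof. by move=> cf k; apply: continuous_comp; [exact: cf| exact: norm_continuous]. Qed.

Lemma sup_norm_hs (f : K -> R) : continuous f -> (exists k : K, True) ->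
  has_sup [set `|f k| | k in [set: K]].
Proof.
move=> cf [k0 _]; apply: compact_has_sup; first by exists `|f k0|, k0.
apply: continuous_compact => //; apply: continuous_subspaceT; exact: norm_cont.
Qed.

Lemma sup_norm_ge (f : K -> R) k : continuous f -> `|f k| <= sup_norm f.
Proof.
move=> cf; apply: sup_upper_bound; first exact: sup_norm_hs.
by exists k.
Qed.

Lemma sup_norm_le (f : K -> R) c : 0 <= c -> (forall k, `|f k| <= c) -> sup_norm f <= c.
Proof.
move=> c0 fc; have [[k0 _]|nK] := pselect (exists k : K, True).
  apply: ge_sup; first by exists `|f k0|; exists k0.
  by move=> y [k _ <-]; apply: fc.
rewrite /sup_norm.
have -> : [set `|f k| | k in [set: K]] = set0.
  by apply/seteqP; split => // y [k _ _]; exfalso; apply: nK; exists k.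
by rewrite sup0.
Qed.

Lemma sup_norm_ge0 (f : K -> R) : 0 <= sup_norm f.
Proof.
have [hs|nhs] := pselect (has_sup [set `|f k| | k in [set: K]]).
  have [y [k0 _ _]] := hs.1.
  by apply: le_trans (normr_ge0 (f k0)) _; apply: sup_upper_bound => //; exists k0.
by rewrite /sup_norm sup_out.
Qed.

Lemma sup_norm_att (f : K -> R) : continuous f -> (exists k : K, True) ->
  exists k, `|f k| = sup_norm f.
Proof.
move=> cf [k0 _].
have [c _ cmax] := @compact_EVT_max K R (fun k => `|f k|) [set: K] (ex_intro _ k0 I) cK
   (continuous_subspaceT (norm_cont cf)).
exists c; apply/esym/sup_eqP; first by exists c.
by move=> y [k _ <-]; apply: cmax; rewrite inE.
Qed.

End SupNorm.

Set Implicit Arguments.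

Section Lin.
Context {R : realType} {N : nat}.

Definition ev (i : 'I_N) : 'I_N -> R := fun j => (j == i)%:R.

Lemma lin_expand (L : ('I_N -> R) -> R) :
  (forall a x y, L (fun i => a * x i + y i) = a * L x + L y) ->
  forall x, L x = \sum_i x i * L (ev i).
Proof.
move=> HL x.
have L0 : L (fun=> 0) = 0.
  have := HL 1 (fun=> 0) (fun=> 0).
  have -> : (fun i : 'I_N => 1 * 0 + 0) = (fun=> 0 : R) by apply/funext => i; rewrite mulr0 addr0.
  rewrite mul1r => H.
  have : L (fun=> 0) + 0 = L (fun=> 0) + L (fun=> 0) by rewrite addr0 {1}H.
  by move/addrI.
have key : forall s : seq 'I_N, uniq s ->
    L (fun i => if i \in s then x i else 0) = \sum_(i <- s) x i * L (ev i).
  elim=> [|j s IH] /=.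
    by move=> _; rewrite big_nil -[X in _ = X]L0.
  move=> /andP[js us]; rewrite big_cons -IH //.
  rewrite -HL; congr L; apply/funext => i; rewrite inE /ev.
  have [->|ij] := eqVneq i j; first by rewrite (negbTE js) mulr1 addr0.

  by rewrite mulr0 add0r.
rewrite -key ?index_enum_uniq //; congr L; apply/funext => i.
by rewrite mem_index_enum.
Qed.

Lemma linf_ge (x : 'I_N -> R) i : `|x i| <= linf_norm x.
Proof. by rewrite /linf_norm; apply: le_bigmax. Qed.

Lemma linf_le (x : 'I_N -> R) c : 0 <= c -> (forall i, `|x i| <= c) -> linf_norm x <= c.
Proof. by move=> c0 H; rewrite /linf_norm; apply: bigmax_le. Qed.

Lemma linf_ev i : linf_norm (ev i) = 1.
Proof.
apply/le_anti/andP; split.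
  by apply: linf_le => // j; rewrite /ev; case: (j == i); rewrite ?normr1 ?normr0.
by have := linf_ge (ev i) i; rewrite /ev eqxx normr1.
Qed.

End Lin.

Set Implicit Arguments.

Section Sep.
Context {R : realType} {K : topologicalType}.
Hypothesis cK : compact [set: K].
Hypothesis hK : hausdorff_space K.

Lemma closed_pt (k : K) : closed [set k].
Proof. exact/accessible_closed_set1/hausdorff_accessible. Qed.

Lemma urysohn01 (A B : set K) : closed A -> closed B -> A `&` B = set0 ->
  exists f : K -> R, [/\ continuous f, (forall k, A k -> f k = 0),
     (forall k, B k -> f k = 1) & (forall k, 0 <= f k <= 1)].
Proof.
move=> cA cB AB.
have [f [cf fA fB fr]] := @urysohn_ext_itv K R (compact_normal hK cK) A B 0 1 cA cB AB ltr01.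
exists f; split => //.
- by move=> k Ak; apply: fA; exists k.
- by move=> k Bk; apply: fB; exists k.
- move=> k; have : range f (f k) by exists k.
  move/fr.
  by rewrite /= in_itv.
Qed.

Lemma sep_points (k k' : K) : k != k' ->
  exists f : K -> R, [/\ continuous f, f k = 0 & f k' = 1].
Proof.
move=> kk.
have [|f [cf f0 f1 _]] := urysohn01 (@closed_pt k) (@closed_pt k').
  apply/seteqP; split => // y [/= -> yk]; exfalso; move/eqP: kk; apply.
  exact: yk.
by exists f; split => //; [apply: f0 | apply: f1].
Qed.

End Sep.

Set Implicit Arguments.

Lemma norm1P {R : realType} (c : R) : `|c| = 1 -> c = 1 \/ c = -1.
Proof.
move=> H; have [c0|c0] := leP 0 c.
  by left; rewrite -(ger0_norm c0).
by right; rewrite (ltr0_norm c0) in H; rewrite -H opprK.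
Qed.

Lemma forward (R : realType) (N : nat) (K : topologicalType) :
  (0 < N)%N -> compact [set: K] -> hausdorff_space K ->
  forall T : ('I_N -> R) -> (K -> R), U_embedding T ->
  exists p : 'I_N -> K, injective p /\ forall i, Gdelta_point (p i).
Proof.
move=> hN cK hK T [[cT [linT isoT]] UT].
pose g i := T (ev i).
have Texp x k : T x k = \sum_i x i * g i k.
  by apply: (lin_expand (L := fun x => T x k)) => a y z; rewrite linT.
have gn i : sup_norm (g i) = 1 by rewrite /g isoT linf_ev.
have Kne : exists k : K, True.
  apply: contrapT => nK.
  have : sup_norm (g (Ordinal hN)) <= 0.
    by apply: sup_norm_le => // k; exfalso; apply: nK; exists k.
  by rewrite gn ler10.
have gle i k : `|g i k| <= 1.
  by apply: le_trans (sup_norm_ge cK k (cT (ev i))) _; rewrite gn.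
have claimA i j k : `|g i k| = 1 -> j != i -> g j k = 0.
  move=> gik ji.
  have H t : `|t| = 1 -> `|t * g j k + g i k| <= 1.
    move=> t1.
    have E : T (fun l => t * ev j l + ev i l) k = t * g j k + g i k by rewrite linT.
    rewrite -E; apply: le_trans (sup_norm_ge cK k (cT _)) _; rewrite isoT.
    apply: linf_le => // l; rewrite /ev.
    have [->|lj] := eqVneq l j; first by rewrite (negbTE ji) mulr1 addr0 t1.
    by rewrite mulr0 add0r; case: (l == i); rewrite ?normr1 ?normr0.
  have := H 1 (normr1 _); have := H (-1); rewrite normrN normr1 => /(_ erefl).
  rewrite !ler_norml => /andP[h1 h2] /andP[h3 h4].
  by case: (norm1P gik) => e; rewrite e in h1 h2 h3 h4 *; lra.
have claimB i k k' : `|g i k| = 1 -> `|g i k'| = 1 -> k = k'.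
  move=> gk gk'.
  pose xs := fun x : 'I_N -> R => x i.
  have linxs : lin_fun_linf xs by [].
  have dn : dual_norm_linf xs = 1.
    apply: sup_eqP.
      by exists (ev i); rewrite /= ?linf_ev // /xs /ev eqxx normr1.
    by move=> y [x /= hx <-]; apply: le_trans (linf_ge x i) hx.
  have phiP kk : `|g i kk| = 1 ->
     CK_dual (fun f : K -> R => g i kk * f kk) /\
     (forall x, (fun f : K -> R => g i kk * f kk) (T x) = xs x) /\
     CK_dual_norm (fun f : K -> R => g i kk * f kk) = dual_norm_linf xs.
    move=> gkk; split; [split|split].
    - by move=> a f h _ _; ring.
    - by exists 1 => f cf; rewrite normrM gkk !mul1r; exact: sup_norm_ge.
    - move=> x /=; rewrite Texp (bigD1 i) //= big1 ?addr0.
        by rewrite /xs; case: (norm1P gkk) => ->; ring.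
      by move=> j ji; rewrite (claimA i j kk) // mulr0.
    - rewrite dn; apply: sup_eqP.
        exists (fun=> 1); last by rewrite /= mulr1 gkk.
        split; first exact: (@cst_continuous K R 1).
        by apply: sup_norm_le => // k0; rewrite normr1.
      move=> y [f [cf sf] <-]; rewrite normrM gkk mul1r.
      exact: le_trans (sup_norm_ge cK kk cf) sf.
  have [c1 [t1 n1]] := phiP k gk; have [c2 [t2 n2]] := phiP k' gk'.
  have E := (UT xs linxs).2 _ _ c1 c2 t1 n1 t2 n2.
  have gg : g i k = g i k' by have := E (fun=> 1) (@cst_continuous K R 1); rewrite /= !mulr1.
  apply: contrapT => /eqP kk.
  have [f [cf f0 f1]] := @sep_points R K cK hK _ _ kk.
  have := E f cf; rewrite /= f0 f1 gg mulr0 mulr1 => H.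
  by move: gk'; rewrite -H normr0 => /eqP; rewrite eq_sym oner_eq0.
have : forall i, exists k, `|g i k| = 1.
  move=> i; have [k hk] := sup_norm_att cK (cT (ev i)) Kne.
  by exists k; rewrite hk gn.
case/choice => p hp.
exists p; split.
  move=> i j pij; apply/eqP; apply: contraT => ij.
  have := claimA i j (p i) (hp i); rewrite eq_sym => /(_ ij).
  rewrite pij => h; have := hp j; rewrite h normr0 => /eqP.
  by rewrite eq_sym oner_eq0.
move=> i; exists (fun n => (fun k => `|g i k|) @^-1` [set x | 1 - n.+1%:R^-1 < x]).
split.
  move=> n; apply: open_comp; last exact: open_gt.
  move=> k _; exact: (norm_cont (cT (ev i))).
apply/seteqP; split => k.
  move=> Hk; apply: (claimB i k (p i)) (hp i).
  apply/le_anti; rewrite gle /= leNgt; apply/negP => lt1.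
  have [n hn] := ltr_add_invr lt1.
  have := Hk n I; rewrite /= ltrBlDr => h2.
  by have := lt_trans h2 hn; rewrite ltxx.
move=> -> n _; rewrite /= hp.
by rewrite ltrBlDr ltrDl invr_gt0 ltr0n.
Qed.

Unset Implicit Arguments.
 Unset Strict Implicit. Unset Printing Implicit Defensive.

Section Cont.
Context {R : realType} {K : topologicalType}.

Lemma cont_cst (c : R) : continuous (fun _ : K => c).
Proof. exact: (@cst_continuous K R c). Qed.

Lemma cont_lin (a : R) (f g : K -> R) : continuous f -> continuous g ->
  continuous (fun k => a * f k + g k).
Proof.
move=> cf cg k.
have h1 : {for k, continuous (fun k => a * f k)}.
  exact: (@continuousM R K (fun=> a) f k (cont_cst a k) (cf k)).
exact: (@continuousD R R^o K (fun k => a * f k) g k h1 (cg k)).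
Qed.

Lemma cont_add (f g : K -> R) : continuous f -> continuous g ->
  continuous (fun k => f k + g k).
Proof.
move=> cf cg; have := cont_lin 1 f g cf cg.
by under eq_fun do rewrite mul1r.
Qed.

Lemma cont_scale (a : R) (f : K -> R) : continuous f -> continuous (fun k => a * f k).
Proof.
move=> cf; have := cont_lin a f (fun=> 0) cf (cont_cst 0).
by under eq_fun do rewrite addr0.
Qed.

Lemma cont_sub (f g : K -> R) : continuous f -> continuous g ->
  continuous (fun k => f k - g k).
Proof.
move=> cf cg; have := cont_lin (-1) g f cg cf.
by under eq_fun do rewrite mulN1r addrC.
Qed.

Lemma cont_sum (I : Type) (s : seq I) (F : I -> K -> R) :
  (forall i, continuous (F i)) -> continuous (fun k => \sum_(i <- s) F i k).
Proof.
move=> cF; elim: s => [|i s IH].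
  by under eq_fun do rewrite big_nil; exact: cont_cst.
by under eq_fun do rewrite big_cons; exact: cont_add _ _ (cF i) IH.
Qed.

End Cont.

Unset Implicit Arguments.

Lemma qsmall {R : realType} (e : R) : 0 < e -> exists m : nat, (2^-1 : R) ^+ m < e.
Proof.
move=> e0; have [n hn] := ltr_add_invr e0; rewrite add0r in hn.
exists n; apply: le_lt_trans hn.
rewrite exprVn lef_pV2 ?posrE ?exprn_gt0 ?ltr0n //.
rewrite -natrX ler_nat; exact: ltn_expl.
Qed.

Lemma peak {R : realType} {K : topologicalType} :
  compact [set: K] -> hausdorff_space K ->
  forall (p : K) (V : set K), open V -> V p -> Gdelta_point p ->
  exists f : K -> R, [/\ continuous f, (forall k, 0 <= f k <= 1), f p = 1,
     (forall k, f k = 1 -> k = p) & (forall k, ~ V k -> f k = 0)].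
Proof.
move=> cK hK p V oV Vp [U [oU hU]].
have Up n : U n p by have : [set p] p by []; rewrite -hU; apply.
have : forall n, exists g : K -> R, [/\ continuous g,
    (forall k, ~ (U n `&` V) k -> g k = 0), g p = 1 & forall k, 0 <= g k <= 1].
  move=> n.
  have cA : closed (~` (U n `&` V)) by apply: open_closedC; apply: openI.
  have AB : ~` (U n `&` V) `&` [set p] = set0.
    apply/seteqP; split => // y [/= nUV yp]; by apply: nUV; rewrite yp; split; [exact: Up | exact: Vp].
  have [g [cg g0 g1 g01]] := @urysohn01 R K cK hK _ _ cA (@closed_pt K hK p) AB.
  by exists g; split => //; exact: g1.
case/choice => g hg.
have cg n : continuous (g n) by case: (hg n).
have gV n k : ~ (U n `&` V) k -> g n k = 0 by case: (hg n) => _ h _ _; apply: h.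
have gp n : g n p = 1 by case: (hg n).
have g01 n k : 0 <= g n k <= 1 by case: (hg n) => _ _ _; apply.
pose q : R := 2^-1.
have q0 : 0 < q by rewrite invr_gt0 ltr0n.
have q2 : q + q = 1 by rewrite /q; field.
have qX0 n : 0 <= q ^+ n by rewrite exprn_ge0 // ltW.
have qS n : q ^+ n.+1 + q ^+ n.+1 = q ^+ n by rewrite exprS -mulrDl q2 mul1r.
pose S m k := \sum_(n < m) q ^+ n.+1 * g n k.
have Sq m : \sum_(n < m) q ^+ n.+1 = 1 - q ^+ m.
  elim: m => [|m IH]; first by rewrite big_ord0 expr0 subrr.
  rewrite big_ord_recr /= IH; have := qS m; lra.
have Sge0 m k : 0 <= S m k.
  apply: sumr_ge0 => n _; apply: mulr_ge0 => //; by case/andP: (g01 n k).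
have Sle m k : S m k <= 1 - q ^+ m.
  rewrite -Sq; apply: ler_sum => n _; rewrite ler_piMr //.
  by case/andP: (g01 n k).
have Srec m k : S m.+1 k = S m k + q ^+ m.+1 * g m k by rewrite /S big_ord_recr.
have Stail m j k : S (m + j)%N k <= S m k + (q ^+ m - q ^+ (m + j)%N).
  elim: j => [|j IH]; first by rewrite addn0 subrr addr0.
  rewrite addnS Srec; have := qS (m + j)%N.
  have : q ^+ (m + j).+1 * g (m + j)%N k <= q ^+ (m + j).+1.
    by rewrite ler_piMr //; case/andP: (g01 (m + j)%N k).
  lra.
have Smono m j k : S m k <= S (m + j)%N k.
  elim: j => [|j IH]; first by rewrite addn0.
  rewrite addnS Srec; apply: le_trans IH _; rewrite lerDl.
  by apply: mulr_ge0 => //; case/andP: (g01 (m + j)%N k).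
have Sbound m m' k : S m' k <= S m k + q ^+ m.
  have [mm|mm] := leqP m' m.
    rewrite -(subnKC mm); apply: le_trans (Smono m' (m - m')%N k) _.
    by rewrite subnKC // lerDl.
  rewrite -(subnKC (ltnW mm)); apply: le_trans (Stail m (m' - m)%N k) _.
  by rewrite lerD2l lerBlDr lerDl.
pose F k := sup (range (fun m => S m k)).
have hsF k : has_sup (range (fun m => S m k)).
  split; first by exists (S 0%N k), 0%N.
  exists 1 => y [m0 _ <-]; apply: le_trans (Sle m0 k) _; rewrite lerBlDr lerDl; exact: qX0.
have FgeS m k : S m k <= F k by apply: sup_upper_bound => //; exists m.
have FleS m k : F k <= S m k + q ^+ m.
  apply: ge_sup; first by exists (S 0%N k), 0%N.
  by move=> y [m' _ <-]; apply: Sbound.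
have F01 k : 0 <= F k <= 1.
  apply/andP; split; first exact: le_trans (Sge0 0%N k) (FgeS 0%N k).
  apply: ge_sup; first by exists (S 0%N k), 0%N.
  by move=> y [m0 _ <-]; apply: le_trans (Sle m0 k) _; rewrite lerBlDr lerDl; exact: qX0.
have Fcont : continuous F.
  move=> k; apply/cvgrPdist_lt => e e0.
  have e3 : 0 < e / 3 by rewrite divr_gt0 // ltr0n.
  have [m hm] := qsmall (e / 3) e3; rewrite -/q in hm.
  have cS : continuous (S m).
    have := @cont_sum R K 'I_m (index_enum 'I_m) (fun (n : 'I_m) k => q ^+ n.+1 * g n k).
    move=> H; apply: H => n; exact: cont_scale _ _ (cg n).
  move/cvgrPdist_lt : (cS k) => /(_ (e / 3) e3).
  apply: filterS => y hy.
  have := FgeS m k; have := FleS m k; have := FgeS m y; have := FleS m y.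
  move: hy; rewrite !ltr_norml => /andP[h1 h2] h3 h4 h5 h6.
  apply/andP; split; lra.
have Fp : F p = 1.
  have Sp m : S m p = 1 - q ^+ m.
    by rewrite -Sq; apply: eq_bigr => n _; rewrite gp mulr1.
  apply/le_anti; rewrite (andP (F01 p)).2 /= leNgt; apply/negP => lt1.
  have [m hm] : exists m, q ^+ m < 1 - F p by apply: qsmall; rewrite subr_gt0.
  have := FgeS m p; rewrite Sp; lra.
have F1 k : F k = 1 -> k = p.
  move=> Fk; apply: contrapT => kp.
  have [n0 hn0] : exists n0, ~ U n0 k.
    apply: contrapT => /forallNP hall; apply: kp.
    have : (\bigcap_n U n) k by move=> n _; apply: contrapT; apply: hall.
    by rewrite hU.
  have g0 : g n0 k = 0 by apply: gV => -[].
  have bnd m : S m k <= 1 - q ^+ n0.+1.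
    pose M := maxn m n0.+1.
    have mM : (m <= M)%N by rewrite leq_maxl.
    apply: le_trans (Smono m (M - m)%N k) _; rewrite subnKC //.
    have nM : (n0 < M)%N by rewrite leq_maxr.
    rewrite /S (bigD1 (Ordinal nM)) //= g0 mulr0 add0r.
    have : \sum_(n < M | n != Ordinal nM) q ^+ n.+1 * g n k <=
           \sum_(n < M | n != Ordinal nM) q ^+ n.+1.
      by apply: ler_sum => n _; rewrite ler_piMr //; case/andP: (g01 n k).
    move/le_trans; apply.
    have := Sq M; rewrite (bigD1 (Ordinal nM)) //= => h.
    have := qX0 M; lra.
  have : F k <= 1 - q ^+ n0.+1.
    by apply: ge_sup; [exists (S 0%N k), 0%N | move=> y [m0 _ <-]; apply: bnd].
  rewrite Fk; have := qX0 n0.+1; have : 0 < q ^+ n0.+1 by rewrite exprn_gt0.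
  lra.
have FV k : ~ V k -> F k = 0.
  move=> nV; have S0 m : S m k = 0.
    by apply: big1 => n _; rewrite gV ?mulr0 // => -[].
  apply/le_anti; rewrite (andP (F01 k)).1 andbT.
  by apply: ge_sup; [exists (S 0%N k), 0%N | move=> y [m0 _ <-]; rewrite S0].
by exists F; split.
Qed.

Unset Implicit Arguments.

Lemma disj_nbhd {N : nat} {K : topologicalType} : hausdorff_space K ->
  forall p : 'I_N -> K, injective p ->
  exists V : 'I_N -> set K, [/\ forall i, open (V i), forall i, V i (p i) &
     forall i j k, V i k -> V j k -> i = j].
Proof.
move=> hK p ip.
have : forall ij : 'I_N * 'I_N, exists AB : set K * set K,
    ij.1 != ij.2 -> [/\ AB.1 (p ij.1), AB.2 (p ij.2), open AB.1, open AB.2 &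
                        AB.1 `&` AB.2 = set0].
  move=> [i j] /=; have [->|ij] := eqVneq i j; first by exists (set0, set0).
  have pij : p i != p j by apply: contra ij => /eqP /ip ->.
  move: hK; rewrite open_hausdorff => /(_ _ _ pij) [[A B] /= [iA jB] [oA oB /eqP AB]].
  by exists (A, B) => _; split => //; apply: set_mem.
move=> HW; have [W hW] := choice HW.
exists (fun i k => forall j, j != i -> (W (i, j)).1 k /\ (W (j, i)).2 k); split.
- move=> i; rewrite openE => k Vk; rewrite /interior.
  have H : forall j : 'I_N, \forall x \near k, (j != i -> (W (i, j)).1 x /\ (W (j, i)).2 x).
    move=> j; have [->|ji] := eqVneq j i.
      by apply: nearW => x /eqP; case.

    have ij : i != j by rewrite eq_sym.
    have [_ _ oA _ _] := hW (i, j) ij.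
    have [_ _ _ oB _] := hW (j, i) ji.
    have [h1 h2] := Vk j ji.
    apply: filterS (filterI (open_nbhs_nbhs (conj oA h1)) (open_nbhs_nbhs (conj oB h2))).
    by move=> x [] *.
  have := @filter_forall K 'I_N _ (nbhs k) _ H.
  by move=> H2; exact: H2.
- move=> i j ji.
  have ij : i != j by rewrite eq_sym.
  have [h1 _ _ _ _] := hW (i, j) ij.
  have [_ h2 _ _ _] := hW (j, i) ji.
  by split.
- move=> i j k Vi Vj; apply/eqP; apply: contraT => ij.
  have [_ _ _ _ AB] := hW (i, j) ij.
  have ji : j != i by rewrite eq_sym.
  have [h1 _] := Vi j ji.
  have [_ h2] := Vj i ij.
  have : ((W (i, j)).1 `&` (W (i, j)).2) k by split.
  by rewrite AB.
Qed.

Unset Implicit Arguments.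

Lemma clampP {R : realType} (t e : R) : 0 < e ->
  [/\ `|t - (t + (`|t - e| - `|t + e|) / 2)| <= e,
      (`|t| < e -> t + (`|t - e| - `|t + e|) / 2 = 0) &
      `|t + (`|t - e| - `|t + e|) / 2| <= `|t| ].
Proof.
move=> e0.
have [h1|h1] := leP 0 (t - e); [rewrite (ger0_norm h1) | rewrite (ltr0_norm h1)];
have [h2|h2] := leP 0 (t + e); rewrite ?(ger0_norm h2) ?(ltr0_norm h2);
have [h3|h3] := leP 0 t; rewrite ?(ger0_norm h3) ?(ltr0_norm h3);
(split; [rewrite ler_norml; apply/andP; split; lra
        | move=> h; apply/eqP; rewrite eq_le; apply/andP; split; lra
        | rewrite ler_norml; apply/andP; split; lra]).
Qed.

Lemma backward (R : realType) (N : nat) (K : topologicalType) :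
  (0 < N)%N -> compact [set: K] -> hausdorff_space K ->
  (exists p : 'I_N -> K, injective p /\ forall i, Gdelta_point (p i)) ->
  exists T : ('I_N -> R) -> (K -> R), U_embedding T.
Proof.
move=> hN cK hK [p [ip gp]].
have [V [oV Vp dV]] := disj_nbhd hK p ip.
have Hf : forall i, exists f : K -> R, [/\ continuous f, (forall k, 0 <= f k <= 1),
    f (p i) = 1, (forall k, f k = 1 -> k = p i) & (forall k, ~ V i k -> f k = 0)].
  by move=> i; exact: (peak cK hK (p i) (V i) (oV i) (Vp i) (gp i)).
have [f hf] := choice Hf.
have cf i : continuous (f i) by case: (hf i).
have f01 i k : 0 <= f i k <= 1 by case: (hf i) => _ h _ _ _; apply: h.
have fp i : f i (p i) = 1 by case: (hf i).
have f1 i k : f i k = 1 -> k = p i by case: (hf i) => _ _ _ h _; apply: h.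
have fV i k : ~ V i k -> f i k = 0 by case: (hf i) => _ _ _ _ h; apply: h.
have fdisj i j k : f i k != 0 -> f j k != 0 -> i = j.
  move=> a b; apply: (dV i j k); apply: contrapT => nV.
    by move: a; rewrite fV ?eqxx.
  by move: b; rewrite fV ?eqxx.
have fpj i j : f i (p j) = (i == j)%:R.
  have [->|ij] := eqVneq i j; first by rewrite fp.
  rewrite fV // => Vij; move/eqP: ij; apply; exact: (dV i j (p j) Vij (Vp j)).
pose T (x : 'I_N -> R) : K -> R := fun k => \sum_i x i * f i k.
pose i0 : 'I_N := Ordinal hN.
have Tone x k : exists i, T x k = x i * f i k.
  have [[i fi]|nf] := pselect (exists i, f i k != 0).
    exists i; rewrite /T (bigD1 i) //= big1 ?addr0 // => j ji.
    have -> : f j k = 0.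
      apply: contrapT => /eqP fj; move/eqP: ji; apply; exact: fdisj j i k fj fi.
    by rewrite mulr0.
  have f0 j : f j k = 0 by apply: contrapT => /eqP fj; apply: nf; exists j.
  by exists i0; rewrite /T big1 ?f0 ?mulr0 // => j _; rewrite f0 mulr0.
have Tp x i : T x (p i) = x i.
  rewrite /T (bigD1 i) //= fp mulr1 big1 ?addr0 // => j ji.
  by rewrite fpj (negbTE ji) mulr0.
have cTx x : continuous (T x).
  have := @cont_sum R K 'I_N (index_enum 'I_N) (fun (i : 'I_N) k => x i * f i k).
  by move=> H; apply: H => i; exact: cont_scale _ _ (cf i).
have linT a x y : T (fun i => a * x i + y i) = (fun k => a * T x k + T y k).
  apply/funext => k; rewrite /T mulr_sumr -big_split; apply: eq_bigr => i _ /=; ring.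
have Tle x k : `|T x k| <= linf_norm x.
  have [i ->] := Tone x k; rewrite normrM; apply: le_trans (linf_ge x i).
  have /andP[a b] := f01 i k; rewrite (ger0_norm a); exact: ler_piMr.
have isoT x : sup_norm (T x) = linf_norm x.
  apply/le_anti/andP; split.
    apply: sup_norm_le => //; exact: le_trans (normr_ge0 (x i0)) (linf_ge x i0).
  apply: linf_le; first exact: sup_norm_ge0.
  by move=> i; have := sup_norm_ge cK (p i) (cTx x); rewrite Tp.
exists T; split; first by split; [|split].
move=> xs linxs.
pose a i := xs (ev i).
have xsE x : xs x = \sum_i x i * a i by exact: lin_expand linxs x.
pose D := \sum_i `|a i|.
have D0 : 0 <= D by apply: sumr_ge0 => i _.
pose s i : R := if 0 <= a i then 1 else -1.
have sa i : s i * a i = `|a i|.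
  rewrite /s; case: ifP => h; first by rewrite mul1r ger0_norm.
  by rewrite mulN1r ltr0_norm // ltNge h.
have s1 i : `|s i| = 1 by rewrite /s; case: ifP => _; rewrite ?normrN normr1.
have linfs : linf_norm s <= 1 by apply: linf_le => // i; rewrite s1.
have xss : xs s = D by rewrite xsE; apply: eq_bigr => i _; rewrite sa.
have dn : dual_norm_linf xs = D.
  apply: sup_eqP; first by exists s => //; rewrite xss ger0_norm.
  move=> y [x hx <-]; rewrite xsE; apply: le_trans (ler_norm_sum _ _ _) _.
  apply: ler_sum => i _; rewrite normrM; apply: ler_piMl => //.
  exact: le_trans (linf_ge x i) hx.
pose h := T s.
have hk k : `|h k| <= 1 := le_trans (Tle s k) linfs.
have hlt k : (forall i, k != p i) -> `|h k| < 1.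
  move=> kp; rewrite /h; have [i ->] := Tone s k; rewrite normrM s1 mul1r.
  have /andP[a0 a1] := f01 i k; rewrite (ger0_norm a0) lt_neqAle a1 andbT.
  by apply/eqP => /f1 /eqP; apply/negP; apply: kp.
pose phi0 (g : K -> R) := \sum_i a i * g (p i).
have bnd0 g : continuous g -> `|phi0 g| <= D * sup_norm g.
  move=> cg; rewrite /phi0 /D mulr_suml; apply: le_trans (ler_norm_sum _ _ _) _.
  apply: ler_sum => i _; rewrite normrM; apply: ler_wpM2l => //.
  by have := sup_norm_ge cK (p i) cg.
have cdual0 : CK_dual phi0.
  split; last by exists D => g cg; exact: bnd0.
  move=> c f' g _ _; rewrite /phi0 mulr_sumr -big_split; apply: eq_bigr => i _ /=; ring.
have phi0T x : phi0 (T x) = xs x.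
  by rewrite /phi0 xsE; apply: eq_bigr => i _; rewrite Tp mulrC.
have n0 : CK_dual_norm phi0 = dual_norm_linf xs.
  rewrite dn; apply: sup_eqP.
    exists h; last by rewrite phi0T xss ger0_norm.
    by split; [exact: cTx | rewrite /h isoT].
  move=> y [g [cg sg] <-]; apply: le_trans (bnd0 g cg) _.
  by rewrite -[leRHS]mulr1; apply: ler_wpM2l.
have uniq phi : CK_dual phi -> (forall x, phi (T x) = xs x) ->
    CK_dual_norm phi = dual_norm_linf xs -> forall g, continuous g -> phi g = phi0 g.
  move=> [linphi [M HM]] tphi nphi.
  rewrite dn in nphi.
  have phiz : phi (fun=> 0) = 0.
    have := linphi 1 (fun=> 0) (fun=> 0) (cont_cst 0) (cont_cst 0).
    have -> : (fun k : K => 1 * 0 + 0) = (fun=> 0 : R).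
      by apply/funext => k; rewrite mulr0 addr0.
    rewrite mul1r => H.
    have : phi (fun=> 0) + 0 = phi (fun=> 0) + phi (fun=> 0) by rewrite addr0 {1}H.
    by move/addrI.
  have hsS : has_sup [set `|phi ff| | ff in [set ff : K -> R | continuous ff /\ sup_norm ff <= 1]].
    split.
      exists `|phi (fun=> 0)|, (fun=> 0) => //; split; first exact: cont_cst.
      by apply: sup_norm_le => // k; rewrite normr0.
    exists `|M| => y [ff [cff sff] <-]; apply: le_trans (HM ff cff) _.
    apply: le_trans (ler_norm _) _; rewrite normrM.
    rewrite (ger0_norm (@sup_norm_ge0 R K ff)); apply: ler_piMr => //.
  have bphi ff : continuous ff -> `|phi ff| <= D * sup_norm ff.
    move=> cff; have s0 := @sup_norm_ge0 R K ff.
    have [sz|snz] := eqVneq (sup_norm ff) 0.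
      have -> : ff = fun=> 0.
        apply/funext => k; apply/normr0_eq0/le_anti.
        by rewrite normr_ge0 andbT; have := sup_norm_ge cK k cff; rewrite sz.
      by rewrite phiz normr0; apply: mulr_ge0 => //; exact: sup_norm_ge0.
    have spos : 0 < sup_norm ff by rewrite lt_neqAle eq_sym snz s0.
    pose ff2 := fun k => (sup_norm ff)^-1 * ff k + 0.
    have cff2 : continuous ff2 := cont_lin _ ff (fun=> 0) cff (cont_cst 0).
    have sff2 : sup_norm ff2 <= 1.
      apply: sup_norm_le => // k; rewrite /ff2 addr0 normrM ger0_norm ?invr_ge0 //.
      rewrite -[leRHS](mulVf snz); apply: ler_wpM2l; first by rewrite invr_ge0.
      by have := sup_norm_ge cK k cff.
    have := sup_upper_bound hsS (ex_intro2 _ _ ff2 (conj cff2 sff2) erefl).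
    rewrite -/(CK_dual_norm phi) nphi /ff2 linphi //; last exact: cont_cst.
    rewrite phiz addr0 normrM ger0_norm ?invr_ge0 // mulrC ler_pdivrMr //.
  have phih : phi h = D by rewrite /h tphi xss.
  have kill1 u : continuous u -> (forall k, `|u k| <= 1 - `|h k|) -> phi u = 0.
    move=> cu hu.
    have b1 c : `|c| = 1 -> c * phi u + D <= D.
      move=> c1.
      have := bphi (fun k => c * u k + h k) (cont_lin c u h cu (cTx s)).
      rewrite linphi //; last exact: cTx.
      rewrite phih => H; apply: le_trans (ler_norm _) _; apply: le_trans H _.
      rewrite -[leRHS]mulr1; apply: ler_wpM2l => //; apply: sup_norm_le => // k.
      apply: le_trans (ler_normD _ _) _; rewrite normrM c1 mul1r; have := hu k; lra.
    have := b1 1 (normr1 _); have := b1 (-1); rewrite normrN normr1 => /(_ erefl).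
    lra.
  have kill u C : continuous u -> 0 < C -> (forall k, `|u k| <= C * (1 - `|h k|)) ->
      phi u = 0.
    move=> cu C0 hu.
    have := kill1 (fun k => C^-1 * u k + 0) (cont_lin _ u _ cu (cont_cst 0)).
    rewrite linphi //; last exact: cont_cst.
    rewrite phiz addr0 => H.
    have : C^-1 * phi u = 0.
      apply: H => k; rewrite addr0 normrM normfV (gtr0_norm C0).
      by rewrite mulrC ler_pdivrMr // mulrC.
    by move/eqP; rewrite mulf_eq0 invr_eq0 (gt_eqF C0) /= => /eqP.
  have zero g : continuous g -> (forall i, g (p i) = 0) -> phi g = 0.
    move=> cg gp0.
    suff H : forall e, 0 < e -> `|phi g| <= D * e.
      apply/normr0_eq0/le_anti; rewrite normr_ge0 andbT.
      apply/ler_addgt0Pr => e e0; rewrite add0r.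
      have D1 : 0 < D + 1 by rewrite ltr_wpDl.
      have := H (e / (D + 1)) (divr_gt0 e0 D1).
      move/le_trans; apply.
      have z0 : 0 < e / (D + 1) by rewrite divr_gt0.
      have ez : (D + 1) * (e / (D + 1)) = e by rewrite mulrC divfK // gt_eqF.
      by rewrite -[leRHS]ez mulrDl mul1r lerDl ltW.
    move=> e e0.
    pose u k := g k + (`|g k - e| - `|g k + e|) / 2.
    have cu : continuous u.
      apply: (cont_add g _ cg).
      have c1 := norm_cont (cont_sub g (fun=> e) cg (cont_cst e)).
      have c2 := norm_cont (cont_add g (fun=> e) cg (cont_cst e)).
      have := cont_scale (2^-1) _ (cont_sub _ _ c1 c2).
      by under eq_fun do rewrite mulrC.
    have phiu : phi u = 0.
      have [[c Fc]|F0] := pselect (exists c, e <= `|g c|).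
        pose Fs := [set k | e <= `|g k|].
        have clF : closed Fs.
          have -> : Fs = (fun k => `|g k|) @^-1` [set x | e <= x] by [].
          apply: preimage_closed; last exact: closed_ge.
          by move=> k _; exact: (norm_cont cg).
        have cpF : compact Fs by apply: (subclosed_compact clF cK).
        have chm : continuous (fun k => 1 - `|h k|).
          exact: cont_sub _ _ (cont_cst 1) (norm_cont (cTx s)).
        have [c0 Fc0 cmin] := @compact_EVT_min K R (fun k => 1 - `|h k|) Fs
            (ex_intro _ c Fc) cpF (continuous_subspaceT chm).
        rewrite inE in Fc0.
        have del0 : 0 < 1 - `|h c0|.
          rewrite subr_gt0; apply: hlt => i; apply/eqP => c0p.
          by move: Fc0; rewrite /Fs /= c0p gp0 normr0 leNgt e0.
        pose C := (sup_norm g + 1) / (1 - `|h c0|).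
        have s0 : 0 <= sup_norm g by exact: sup_norm_ge0.
        have C0 : 0 < C by rewrite divr_gt0 // ltr_wpDl.
        apply: (kill u C cu C0) => k.
        have [hk2|hk2] := ltP (`|g k|) e.
          have [_ H2 _] := clampP (g k) e e0.
          rewrite /u (H2 hk2) normr0; apply: mulr_ge0; first exact: ltW.
          by rewrite subr_ge0; exact: hk k.
        have Fk : Fs k by [].
        have hmin := cmin k (mem_set Fk).
        have [_ _ H3] := clampP (g k) e e0.
        rewrite /u; apply: le_trans H3 _.
        have := sup_norm_ge cK k cg => H4.
        have eqC : C * (1 - `|h c0|) = sup_norm g + 1 by rewrite /C divfK // gt_eqF.
        have := ler_wpM2l (ltW C0) hmin; rewrite eqC => H5.
        lra.
      apply: (kill u 1 cu ltr01) => k; rewrite mul1r.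
      have hlt' : `|g k| < e by rewrite ltNge; apply/negP => hk2; apply: F0; exists k.
      have [_ H2 _] := clampP (g k) e e0.
      by rewrite /u (H2 hlt') normr0 subr_ge0; exact: hk k.
    have -> : g = fun k => 1 * u k + (g k - u k).
      by apply/funext => k; rewrite mul1r addrC subrK.
    rewrite linphi //; last exact: cont_sub.
    rewrite phiu mulr0 add0r; apply: le_trans (bphi _ (cont_sub _ _ cg cu)) _.
    apply: ler_wpM2l => //; apply: sup_norm_le; first exact: ltW.
    by move=> k; have [+ _ _] := clampP (g k) e e0.
  move=> g cg.
  pose y i := g (p i).
  have cg' : continuous (fun k => g k - T y k) := cont_sub g (T y) cg (cTx y).
  have z0 : phi (fun k => g k - T y k) = 0.
    by apply: zero => // i; rewrite Tp subrr.
  have -> : g = fun k => 1 * (g k - T y k) + T y k.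
    by apply/funext => k; rewrite mul1r subrK.
  rewrite linphi //.
  rewrite z0 mulr0 add0r tphi /phi0 xsE; apply: eq_bigr => i _.
  by rewrite mul1r subrK mulrC.
split; first by exists phi0.
move=> phi1 phi2 c1 c2 t1 e1 t2 e2 g cg.
by rewrite (uniq phi1) // (uniq phi2).
Qed.

Unset Implicit Arguments.

Theorem proposition6p31 (R : realType) (N : nat) (K : topologicalType) :
  (0 < N)%N -> compact [set: K] -> hausdorff_space K ->
  ((exists T : ('I_N -> R) -> (K -> R), U_embedding T) <->
   (exists p : 'I_N -> K, injective p /\ forall i, Gdelta_point (p i))).
Proof.
move=> hN cK hK; split.
  by case=> T hT; exact: (forward hN cK hK hT).
exact: (backward R N K hN cK hK).
Qed.
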